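(* Let $T$ be a Sarason-Toeplitz operator on $H^2(\mathbb{T})$. Then the adjoint $T^*$ is also a Sarason-Toeplitz operator.
   Context: $H^2=H^2(\mathbb{T})$ is the Hardy space, viewed as the closed subspace of $L^2(\mathbb{T})$ spanned by $\{e^{in\theta}\}_{n\ge 0}$ (equivalently, analytic functions on the unit disc with square-summable Taylor coefficients), and $S=M_z$ is the shift operator $Sf=zf$. A Sarason-Toeplitz operator is a closed, densely defined (linear) operator $T$ on $H^2$ with domain $D(T)$ such that: (1) $D(T)$ is $S$-invariant, i.e. $zf\in D(T)$ whenever $f\in D(T)$; (2) $S^*TS=T$, i.e. $S^*T(zf)=Tf$ for all $f\in D(T)$; (3) if $f\in D(T)$ and $f(0)=0$, then $S^*f\in D(T)$. *)

(* Defs.v *)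
(* H^2(T) is modelled, via Taylor coefficients,
   as the space l^2(N) of square-summable complex sequences f : nat -> C. *)
From Stdlib Require Import Reals.
From Coquelicot Require Import Coquelicot.
Open Scope R_scope.

Definition vec := nat -> C.

Definition l2 (f : vec) : Prop := ex_series (fun n => (Cmod (f n)) ^ 2).

Definition vzero : vec := fun _ => RtoC 0.
Definition vadd (f g : vec) : vec := fun n => Cplus (f n) (g n).
Definition vsub (f g : vec) : vec := fun n => Cminus (f n) (g n).
Definition vscal (a : C) (f : vec) : vec := fun n => Cmult a (f n).

Definition ip (f g : vec) : C :=
  (Series (fun n => Re (Cmult (f n) (Cconj (g n)))),
   Series (fun n => Im (Cmult (f n) (Cconj (g n))))).

Definition l2norm (f : vec) : R := sqrt (Series (fun n => (Cmod (f n)) ^ 2)).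

(* the shift S = M_z and its adjoint S^* on Taylor coefficients *)
Definition shift (f : vec) : vec :=
  fun n => match n with O => RtoC 0 | S m => f m end.
Definition shift_adj (f : vec) : vec := fun n => f (S n).

(* An (unbounded) operator is a domain D together with a map T, only
   meaningful on D. *)
Definition linear_op (D : vec -> Prop) (T : vec -> vec) : Prop :=
  (forall f, D f -> l2 f) /\
  D vzero /\
  (forall f g, D f -> D g -> D (vadd f g)) /\
  (forall a f, D f -> D (vscal a f)) /\
  (forall f, D f -> l2 (T f)) /\
  (forall a b f g, D f -> D g ->
     T (vadd (vscal a f) (vscal b g)) = vadd (vscal a (T f)) (vscal b (T g))).

Definition densely_defined (D : vec -> Prop) : Prop :=
  forall f, l2 f -> forall eps, 0 < eps -> exists g, D g /\ l2norm (vsub f g) < eps.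

Definition closed_op (D : vec -> Prop) (T : vec -> vec) : Prop :=
  forall (u : nat -> vec) (f g : vec),
    (forall k, D (u k)) -> l2 f -> l2 g ->
    is_lim_seq (fun k => l2norm (vsub (u k) f)) 0 ->
    is_lim_seq (fun k => l2norm (vsub (T (u k)) g)) 0 ->
    D f /\ T f = g.

Definition sarason_toeplitz (D : vec -> Prop) (T : vec -> vec) : Prop :=
  linear_op D T /\ closed_op D T /\ densely_defined D /\
  (forall f, D f -> D (shift f)) /\
  (forall f, D f -> shift_adj (T (shift f)) = T f) /\
  (forall f, D f -> f O = RtoC 0 -> D (shift_adj f)).

Definition is_adjoint (D : vec -> Prop) (T : vec -> vec)
                      (D' : vec -> Prop) (T' : vec -> vec) : Prop :=
  (forall g, D' g <-> (l2 g /\ exists h, l2 h /\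
                        forall f, D f -> ip (T f) g = ip f h)) /\
  (forall g, D' g -> l2 (T' g)) /\
  (forall g f, D' g -> D f -> ip (T f) g = ip f (T' g)).

(* Main.v *)
Require Import Defs.
From Stdlib Require Import Reals.
From Coquelicot Require Import Coquelicot.
From Stdlib Require Import Lra Psatz Classical ClassicalEpsilon FunctionalExtensionality.
Open Scope R_scope.

Definition sqn (z : C) : R := fst z ^ 2 + snd z ^ 2.
Lemma Cmod2 (z : C) : Cmod z ^ 2 = sqn z.
Proof. unfold Cmod, sqn. rewrite pow2_sqrt; [reflexivity| nra]. Qed.
Lemma sqn_ge0 z : 0 <= sqn z. Proof. unfold sqn; nra. Qed.

Lemma ex_series_ext' (a b : nat -> R) : (forall n, a n = b n) -> ex_series a -> ex_series b.
Proof. intros H. apply ex_series_ext. exact H. Qed.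

Lemma exR_plus a b : ex_series a -> ex_series b -> ex_series (fun n => a n + b n).
Proof. intros Ha Hb. exact (ex_series_plus a b Ha Hb). Qed.
Lemma exR_scal c a : ex_series a -> ex_series (fun n => c * a n).
Proof. intros Ha. exact (ex_series_scal_l c a Ha). Qed.
Lemma exR_dom (a p q : nat -> R) c : (forall n, Rabs (a n) <= c * (p n + q n)) ->
  ex_series p -> ex_series q -> ex_series a.
Proof. intros H Hp Hq. apply (ex_series_le a (fun n => c * (p n + q n))).
  - intros n. exact (H n).
  - apply exR_scal, exR_plus; assumption. Qed.

Lemma l2_alt f : l2 f <-> ex_series (fun n => sqn (f n)).
Proof. split; apply ex_series_ext; intros n; [|symmetry]; apply Cmod2. Qed.

Ltac ptac := repeat match goal with z : C |- _ => destruct z end;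
  unfold sqn, Cminus, Cconj, Cmult, Cplus, Copp, RtoC, Re, Im in *; simpl in *.

Lemma Series_zero : Series (fun _ => 0) = 0.
Proof. rewrite (Series_ext _ (fun n => 0 * 0)) by (intros; ring).
  rewrite (Series_scal_l 0 (fun _ => 0)). ring. Qed.

Lemma Series_lin2 a b x y : ex_series a -> ex_series b ->
  Series (fun n => x * a n + y * b n) = x * Series a + y * Series b.
Proof. intros Ha Hb. rewrite Series_plus.
  - rewrite !Series_scal_l. reflexivity.
  - apply exR_scal; auto.
  - apply exR_scal; auto. Qed.

Lemma Series_lin3 a b c x y z : ex_series a -> ex_series b -> ex_series c ->
  Series (fun n => x * a n + y * b n + z * c n) = x * Series a + y * Series b + z * Series c.
Proof. intros Ha Hb Hc. rewrite Series_plus.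
  - rewrite Series_lin2 by auto. rewrite Series_scal_l. reflexivity.
  - apply exR_plus; apply exR_scal; auto.
  - apply exR_scal; auto. Qed.

Definition N2 (f : vec) : R := Series (fun n => sqn (f n)).
Definition rip (f g : vec) : R := Series (fun n => Re (Cmult (f n) (Cconj (g n)))).

Lemma l2norm_N2 f : l2norm f = sqrt (N2 f).
Proof. unfold l2norm, N2. f_equal. apply Series_ext. intros; apply Cmod2. Qed.

Lemma N2_ge0 f : l2 f -> 0 <= N2 f.
Proof. intros H. unfold N2. rewrite <- Series_zero. apply Series_le.
  - intros n; split; [lra| apply sqn_ge0].
  - apply l2_alt; exact H. Qed.

Lemma Series_nonneg a : (forall n, 0 <= a n) -> ex_series a -> 0 <= Series a.
Proof. intros H He. rewrite <- Series_zero. apply Series_le; auto.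
  intros n; split; [lra|auto]. Qed.

Lemma term_le_Series a n : (forall n, 0 <= a n) -> ex_series a -> a n <= Series a.
Proof. intros H He. rewrite (Series_incr_n a (S n)) by (auto; lia). simpl pred.
  assert (0 <= Series (fun k => a (S n + k)%nat)).
  { apply Series_nonneg; auto. apply (ex_series_incr_n a (S n)); auto. }
  assert (a n <= sum_f_R0 a n).
  { destruct n; simpl; [lra|]. pose proof (cond_pos_sum a n H). lra. }
  lra. Qed.

Lemma term_le_N2 f n : l2 f -> sqn (f n) <= N2 f.
Proof. intros H. apply (term_le_Series (fun n => sqn (f n))).
  - intros; apply sqn_ge0.
  - apply l2_alt; exact H. Qed.


Lemma l2_dom f g h c : (forall n, sqn (f n) <= c * (sqn (g n) + sqn (h n))) -> l2 g -> l2 h -> l2 f.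
Proof. intros H Hg Hh. apply l2_alt. apply (exR_dom _ (fun n => sqn (g n)) (fun n => sqn (h n)) c).
  - intros n. rewrite Rabs_pos_eq by apply sqn_ge0. apply H.
  - apply l2_alt; auto.
  - apply l2_alt; auto. Qed.

Lemma ex_zero : ex_series (fun _ => 0).
Proof. exists 0. unfold is_series. apply filterlim_ext with (fun _ => 0).
  - intros n. rewrite sum_n_const. simpl. ring.
  - apply filterlim_const. Qed.

Lemma sqn_add_le a b : sqn (Cplus a b) <= 2 * (sqn a + sqn b).
Proof. destruct a as [a1 a2], b as [b1 b2]; unfold sqn; simpl.
  pose proof (pow2_ge_0 (a1 - b1)); pose proof (pow2_ge_0 (a2 - b2)). nra. Qed.
Lemma sqn_sub_le a b : sqn (Cminus a b) <= 2 * (sqn a + sqn b).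
Proof. destruct a as [a1 a2], b as [b1 b2]; unfold sqn; simpl.
  pose proof (pow2_ge_0 (a1 + b1)); pose proof (pow2_ge_0 (a2 + b2)). nra. Qed.
Lemma sqn_mul a b : sqn (Cmult a b) = sqn a * sqn b.
Proof. destruct a as [a1 a2], b as [b1 b2]; unfold sqn; simpl. ring. Qed.
Lemma re_le a b : - (sqn a + sqn b) <= Re (Cmult a (Cconj b)) <= sqn a + sqn b.
Proof. destruct a as [a1 a2], b as [b1 b2]; unfold sqn; simpl.
  pose proof (pow2_ge_0 (a1 - b1)); pose proof (pow2_ge_0 (a2 - b2)).
  pose proof (pow2_ge_0 (a1 + b1)); pose proof (pow2_ge_0 (a2 + b2)). split; nra. Qed.

Lemma l2_add f g : l2 f -> l2 g -> l2 (vadd f g).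
Proof. intros; apply (l2_dom _ f g 2); auto. intros n; apply sqn_add_le. Qed.
Lemma l2_sub f g : l2 f -> l2 g -> l2 (vsub f g).
Proof. intros; apply (l2_dom _ f g 2); auto. intros n; apply sqn_sub_le. Qed.
Lemma l2_scal c f : l2 f -> l2 (vscal c f).
Proof. intros; apply (l2_dom _ f f (sqn c)); auto. intros n; unfold vscal. rewrite sqn_mul.
  assert (0 <= sqn c) by apply sqn_ge0. assert (0 <= sqn (f n)) by apply sqn_ge0. nra. Qed.
Lemma l2_zero : l2 vzero.
Proof. apply l2_alt. apply (ex_series_ext (fun _ => 0)); [intros n; unfold vzero; ptac; ring| apply ex_zero]. Qed.
Lemma l2_shift f : l2 f -> l2 (shift f).
Proof. intros H. apply l2_alt in H. apply l2_alt. apply ex_series_incr_1. simpl. exact H. Qed.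
Lemma l2_sadj f : l2 f -> l2 (shift_adj f).
Proof. intros H. apply l2_alt in H. apply l2_alt. apply ex_series_incr_1 in H. exact H. Qed.

Lemma ex_rip f g : l2 f -> l2 g -> ex_series (fun n => Re (Cmult (f n) (Cconj (g n)))).
Proof. intros Hf Hg. apply (exR_dom _ (fun n => sqn (f n)) (fun n => sqn (g n)) 1).
  - intros n. apply Rabs_le. rewrite Rmult_1_l. apply re_le.
  - apply l2_alt; auto.
  - apply l2_alt; auto. Qed.

Lemma rip_sym f g : rip f g = rip g f.
Proof. apply Series_ext. intros n. generalize (f n) (g n); intros. ptac. ring. Qed.
Lemma rip_self f : rip f f = N2 f.
Proof. apply Series_ext. intros n. generalize (f n); intros. ptac. ring. Qed.
Lemma rip_addl f g h : l2 f -> l2 g -> l2 h -> rip (vadd f g) h = rip f h + rip g h.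
Proof. intros. unfold rip. rewrite (Series_ext _ (fun n => 1 * Re (Cmult (f n) (Cconj (h n))) + 1 * Re (Cmult (g n) (Cconj (h n))))).
  - rewrite Series_lin2 by (apply ex_rip; auto). ring.
  - intros n. unfold vadd. generalize (f n) (g n) (h n); intros. ptac. ring. Qed.
Lemma rip_subl f g h : l2 f -> l2 g -> l2 h -> rip (vsub f g) h = rip f h - rip g h.
Proof. intros. unfold rip. rewrite (Series_ext _ (fun n => 1 * Re (Cmult (f n) (Cconj (h n))) + (-1) * Re (Cmult (g n) (Cconj (h n))))).
  - rewrite Series_lin2 by (apply ex_rip; auto). ring.
  - intros n. unfold vsub. generalize (f n) (g n) (h n); intros. ptac. ring. Qed.
Lemma rip_scall t f h : rip (vscal (RtoC t) f) h = t * rip f h.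
Proof. unfold rip. rewrite <- Series_scal_l. apply Series_ext. intros n. unfold vscal. generalize (f n) (h n); intros. ptac. ring. Qed.
Lemma rip_cscal c f h : rip (vscal c f) h = rip f (vscal (Cconj c) h).
Proof. apply Series_ext. intros n. unfold vscal. generalize (f n) (h n); intros. ptac. ring. Qed.
Lemma rip_zero f : rip f vzero = 0.
Proof. unfold rip. rewrite <- Series_zero. apply Series_ext. intros n. unfold vzero. generalize (f n); intros. ptac. ring. Qed.
Lemma rip_addr f g h : l2 f -> l2 g -> l2 h -> rip h (vadd f g) = rip h f + rip h g.
Proof. intros. rewrite !(rip_sym h). apply rip_addl; auto. Qed.
Lemma rip_subr f g h : l2 f -> l2 g -> l2 h -> rip h (vsub f g) = rip h f - rip h g.
Proof. intros. rewrite !(rip_sym h). apply rip_subl; auto. Qed.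
Lemma rip_scalr t f h : rip h (vscal (RtoC t) f) = t * rip h f.
Proof. rewrite !(rip_sym h). apply rip_scall. Qed.

Lemma N2_quad y g t : l2 y -> l2 g ->
  N2 (vsub y (vscal (RtoC t) g)) = N2 y - 2 * t * rip y g + t ^ 2 * N2 g.
Proof. intros. unfold N2, rip.
  rewrite (Series_ext _ (fun n => 1 * sqn (y n) + (- 2 * t) * Re (Cmult (y n) (Cconj (g n))) + (t ^ 2) * sqn (g n))).
  - rewrite Series_lin3; try (apply l2_alt; auto); try (apply ex_rip; auto). ring.
  - intros n. unfold vsub, vscal. generalize (y n) (g n); intros. ptac. ring. Qed.

Lemma quad_disc A B Cc : 0 <= A -> 0 <= Cc -> (forall t, 0 <= A - 2 * t * B + t ^ 2 * Cc) -> B ^ 2 <= A * Cc.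
Proof. intros HA HC Q.
  destruct (Req_dec Cc 0) as [E|E].
  - destruct (Req_dec B 0) as [E2|E2]. { rewrite E2. nra. }
    specialize (Q ((A + 1) / (2 * B))). rewrite E in Q.
    exfalso. replace (A - 2 * ((A + 1) / (2 * B)) * B + ((A + 1) / (2 * B)) ^ 2 * 0) with (-1) in Q by (field; auto). lra.
  - specialize (Q (B / Cc)).
    replace (A - 2 * (B / Cc) * B + (B / Cc) ^ 2 * Cc) with ((A * Cc - B ^ 2) / Cc) in Q by (field; auto).
    assert (0 < Cc) by lra.
    assert (0 <= (A * Cc - B ^ 2)) by (apply (Rmult_le_compat_r Cc) in Q; [|lra]; field_simplify in Q; lra).
    lra. Qed.

Lemma CS y g : l2 y -> l2 g -> rip y g ^ 2 <= N2 y * N2 g.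
Proof. intros Hy Hg. apply quad_disc; try (apply N2_ge0; auto).
  intros t. rewrite <- N2_quad by auto. apply N2_ge0. apply l2_sub; auto. apply l2_scal; auto. Qed.

Lemma partial_le_Series a N : (forall n, 0 <= a n) -> ex_series a -> sum_n a N <= Series a.
Proof. intros H He. rewrite (Series_incr_n a (S N)) by (auto; lia). simpl pred.
  rewrite sum_n_Reals.
  assert (0 <= Series (fun k => a (S N + k)%nat)).
  { apply Series_nonneg; auto. apply (ex_series_incr_n a (S N)); auto. }
  lra. Qed.

Lemma lim_sum_n (F : nat -> nat -> R) (L : nat -> R) N :
  (forall n, is_lim_seq (fun j => F j n) (L n)) ->
  is_lim_seq (fun j => sum_n (F j) N) (sum_n L N).
Proof. intros H. induction N.
  - apply (is_lim_seq_ext (fun j => F j 0%nat)). { intros; rewrite sum_O; auto. } rewrite sum_O. apply H.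
  - rewrite sum_Sn. apply (is_lim_seq_ext (fun j => sum_n (F j) N + F j (S N))).
    { intros; rewrite sum_Sn; reflexivity. }
    apply is_lim_seq_plus'; auto. Qed.

Lemma lim_le_const (w : nat -> R) (l c : R) K : is_lim_seq w l -> (forall j, (K <= j)%nat -> w j <= c) -> l <= c.
Proof. intros Hw Hc. apply (is_lim_seq_incr_n w K) in Hw.
  pose proof (is_lim_seq_le (fun n => w (n + K)%nat) (fun _ => c) l c) as P.
  simpl in P. apply P; auto. intros; apply Hc; lia. apply is_lim_seq_const. Qed.

Lemma fin_lim (w : nat -> R) : ex_finite_lim_seq w -> is_lim_seq w (real (Lim_seq w)).
Proof. intros H. exact (Lim_seq_correct' w H). Qed.

Lemma l2_complete (u : nat -> vec) : (forall k, l2 (u k)) ->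
  (forall eps, 0 < eps -> exists K, forall j k, (K <= j)%nat -> (K <= k)%nat -> N2 (vsub (u j) (u k)) < eps) ->
  exists v, l2 v /\ forall eps, 0 < eps -> exists K, forall k, (K <= k)%nat -> N2 (vsub (u k) v) < eps.
Proof. intros Hl Hc.
  assert (Hcomp : forall (p : C -> R) n, (forall z, p z ^ 2 <= sqn z) ->
     (forall a b, p (Cminus a b) = p a - p b) ->
     ex_finite_lim_seq (fun k => p (u k n))).
  { intros p n Hp Hm. apply ex_lim_seq_cauchy_corr. intros eps.
    destruct (Hc (eps * eps)) as [K HK]. { pose proof (cond_pos eps). nra. }
    exists K. intros j k Hj Hk. specialize (HK j k Hj Hk).
    pose proof (term_le_N2 (vsub (u j) (u k)) n (l2_sub _ _ (Hl j) (Hl k))) as T.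
    pose proof (Hp (vsub (u j) (u k) n)) as T2. unfold vsub in T2. rewrite Hm in T2.
    pose proof (cond_pos eps).
    assert (A : Rabs (p (u j n) - p (u k n)) < Rabs eps).
    { apply Rsqr_lt_abs_0. unfold Rsqr. change (sqn (vsub (u j) (u k) n)) with (sqn (u j n - u k n)%C) in T. simpl in T2. lra. }
    rewrite (Rabs_pos_eq eps) in A by lra. exact A. }
  set (v := fun n => (real (Lim_seq (fun k => fst (u k n))), real (Lim_seq (fun k => snd (u k n)))) : C).
  assert (Hv : forall n, is_lim_seq (fun k => fst (u k n)) (fst (v n)) /\ is_lim_seq (fun k => snd (u k n)) (snd (v n))).
  { intros n; split; apply fin_lim; apply Hcomp; intros; unfold sqn; simpl; try ring.
    all: pose proof (pow2_ge_0 (fst z)); pose proof (pow2_ge_0 (snd z)); lra. }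
  assert (Hterm : forall k n, is_lim_seq (fun j => sqn (Cminus (u k n) (u j n))) (sqn (Cminus (u k n) (v n)))).
  { intros k n. destruct (Hv n) as [H1 H2].
    assert (E : forall a b : C, sqn (Cminus a b) = (fst a - fst b) * (fst a - fst b) + (snd a - snd b) * (snd a - snd b)).
    { intros [a1 a2] [b1 b2]; unfold sqn; simpl; ring. }
    apply (is_lim_seq_ext (fun j => (fst (u k n) - fst (u j n)) * (fst (u k n) - fst (u j n)) + (snd (u k n) - snd (u j n)) * (snd (u k n) - snd (u j n)))).
    { intros; rewrite E; reflexivity. }
    rewrite E.
    apply is_lim_seq_plus'; apply is_lim_seq_mult'; apply is_lim_seq_minus'; auto; apply is_lim_seq_const. }
  assert (Hmain : forall eps, 0 < eps -> exists K, forall k, (K <= k)%nat ->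
     ex_series (fun n => sqn (vsub (u k) v n)) /\ Series (fun n => sqn (vsub (u k) v n)) <= eps).
  { intros eps Heps. destruct (Hc eps Heps) as [K HK]. exists K. intros k Hk.
    assert (Hpart : forall N, sum_n (fun n => sqn (vsub (u k) v n)) N <= eps).
    { intros N. apply (lim_le_const (fun j => sum_n (fun n => sqn (Cminus (u k n) (u j n))) N) _ eps K).
      - apply (lim_sum_n (fun j n => sqn (Cminus (u k n) (u j n))) (fun n => sqn (vsub (u k) v n))).
        intros n. apply Hterm.
      - intros j Hj. eapply Rle_trans. apply (partial_le_Series (fun n => sqn (vsub (u k) (u j) n))).
        + intros; apply sqn_ge0.
        + apply l2_alt, l2_sub; auto.
        + left. apply HK; auto. }
    assert (Hex : ex_series (fun n => sqn (vsub (u k) v n))).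
    { destruct (ex_finite_lim_seq_incr (sum_n (fun n => sqn (vsub (u k) v n))) eps) as [l Hl'].
      - intros n. rewrite sum_Sn. rewrite <- (Rplus_0_r (sum_n _ n)) at 1. apply Rplus_le_compat_l, sqn_ge0.
      - exact Hpart.
      - exists l. exact Hl'. }
    split; auto.
    apply (lim_le_const (sum_n (fun n => sqn (vsub (u k) v n))) _ eps 0); auto.
    apply Series_correct. exact Hex. }
  exists v. split.
  - destruct (Hmain 1 Rlt_0_1) as [K HK]. destruct (HK K (le_n K)) as [Hex _].
    apply (l2_dom v (u K) (vsub (u K) v) 2).
    + intros n. unfold vsub. generalize (u K n) (v n). intros a b.
      replace b with (Cminus a (Cminus a b)) at 1 by (destruct a, b; unfold Cminus, Cplus, Copp; simpl; f_equal; ring).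
      apply sqn_sub_le.
    + auto.
    + apply l2_alt. exact Hex.
  - intros eps Heps. destruct (Hmain (eps / 2)) as [K HK]. lra. exists K. intros k Hk.
    destruct (HK k Hk) as [_ HS]. unfold N2. lra.
Qed.

Lemma N2_ext f g : (forall n, f n = g n) -> N2 f = N2 g.
Proof. intros H. unfold N2. apply Series_ext. intros; rewrite H; auto. Qed.

Lemma parallel_v x p q : l2 x -> l2 p -> l2 q ->
  N2 (vsub p q) = 2 * N2 (vsub x p) + 2 * N2 (vsub x q) + (-4) * N2 (vsub x (vscal (RtoC (1/2)) (vadd p q))).
Proof. intros. unfold N2. rewrite <- Series_lin3.
  - apply Series_ext. intros n. unfold vsub, vscal, vadd. generalize (x n) (p n) (q n); intros. ptac. field.
  - apply l2_alt, l2_sub; auto.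
  - apply l2_alt, l2_sub; auto.
  - apply l2_alt, l2_sub; auto. apply l2_scal, l2_add; auto. Qed.

Lemma tri_v a b c : l2 a -> l2 b -> l2 c -> N2 (vsub a c) <= 2 * N2 (vsub a b) + 2 * N2 (vsub b c).
Proof. intros. unfold N2. rewrite <- Series_lin2.
  - apply Series_le.
    + intros n. split. apply sqn_ge0. unfold vsub.
      replace (Cminus (a n) (c n)) with (Cplus (Cminus (a n) (b n)) (Cminus (b n) (c n))).
      * pose proof (sqn_add_le (Cminus (a n) (b n)) (Cminus (b n) (c n))). lra.
      * generalize (a n) (b n) (c n); intros. ptac. f_equal; ring.
    + apply exR_plus; apply exR_scal; apply l2_alt, l2_sub; auto.
  - apply l2_alt, l2_sub; auto.
  - apply l2_alt, l2_sub; auto. Qed.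

Definition pv := (vec * vec)%type.
Definition l2p (p : pv) := l2 (fst p) /\ l2 (snd p).
Definition N2p (p : pv) := N2 (fst p) + N2 (snd p).
Definition ripp (p q : pv) := rip (fst p) (fst q) + rip (snd p) (snd q).
Definition padd (p q : pv) : pv := (vadd (fst p) (fst q), vadd (snd p) (snd q)).
Definition psub (p q : pv) : pv := (vsub (fst p) (fst q), vsub (snd p) (snd q)).
Definition pscal (t : R) (p : pv) : pv := (vscal (RtoC t) (fst p), vscal (RtoC t) (snd p)).
Definition pzero : pv := (vzero, vzero).

Lemma l2p_add p q : l2p p -> l2p q -> l2p (padd p q).
Proof. intros [] []; split; apply l2_add; auto. Qed.
Lemma l2p_sub p q : l2p p -> l2p q -> l2p (psub p q).
Proof. intros [] []; split; apply l2_sub; auto. Qed.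
Lemma l2p_scal t p : l2p p -> l2p (pscal t p).
Proof. intros []; split; apply l2_scal; auto. Qed.
Lemma N2p_ge0 p : l2p p -> 0 <= N2p p.
Proof. intros []; unfold N2p. pose proof (N2_ge0 _ H); pose proof (N2_ge0 _ H0). lra. Qed.

Lemma N2p_quad y g t : l2p y -> l2p g ->
  N2p (psub y (pscal t g)) = N2p y - 2 * t * ripp y g + t ^ 2 * N2p g.
Proof. intros [] []. unfold N2p, ripp, psub, pscal; simpl. rewrite !N2_quad by auto. ring. Qed.

Lemma CSp y g : l2p y -> l2p g -> ripp y g ^ 2 <= N2p y * N2p g.
Proof. intros Hy Hg. apply quad_disc; try (apply N2p_ge0; auto).
  intros t. rewrite <- N2p_quad by auto. apply N2p_ge0. apply l2p_sub; auto. apply l2p_scal; auto. Qed.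

Lemma psub_assoc x s g t : psub x (padd s (pscal t g)) = psub (psub x s) (pscal t g).
Proof. unfold psub, padd, pscal; simpl. f_equal; apply functional_extensionality; intros n;
  unfold vsub, vadd, vscal; generalize (fst x n) (snd x n) (fst s n) (snd s n) (fst g n) (snd g n); intros; ptac; f_equal; ring. Qed.

Lemma parallel_p x p q : l2p x -> l2p p -> l2p q ->
  N2p (psub p q) = 2 * N2p (psub x p) + 2 * N2p (psub x q) + (-4) * N2p (psub x (pscal (1/2) (padd p q))).
Proof. intros [] [] []. unfold N2p, psub, pscal, padd; simpl. rewrite (parallel_v (fst x) (fst p)), (parallel_v (snd x) (snd p)) by auto. ring. Qed.

Lemma ripp_split x s m g : l2p x -> l2p s -> l2p m -> l2p g ->
  ripp (psub x m) g = ripp (psub x s) g + ripp (psub s m) g.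
Proof. intros [] [] [] []. unfold ripp, psub; simpl. rewrite !rip_subl by auto. ring. Qed.

Lemma small_inv eps : 0 < eps -> exists K, / (INR K + 1) < eps.
Proof. intros H. destruct (archimed_cor1 eps H) as [N [H1 H2]]. exists N.
  eapply Rle_lt_trans; [|exact H1]. apply Rinv_le_contravar.
  - apply lt_0_INR; auto.
  - lra. Qed.

Lemma inv_mono j K : (K <= j)%nat -> / (INR j + 1) <= / (INR K + 1).
Proof. intros H. apply Rinv_le_contravar. pose proof (pos_INR K); lra. apply le_INR in H. lra. Qed.
Lemma inv_pos j : 0 < / (INR j + 1).
Proof. apply Rinv_0_lt_compat. pose proof (pos_INR j); lra. Qed.

Lemma projection (M : pv -> Prop) (x : pv) :
  (forall p, M p -> l2p p) -> M pzero -> (forall p q, M p -> M q -> M (padd p q)) ->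
  (forall t p, M p -> M (pscal t p)) -> l2p x ->
  exists m (s : nat -> pv), l2p m /\ (forall k, M (s k)) /\
    (forall eps, 0 < eps -> exists K, forall k, (K <= k)%nat -> N2p (psub (s k) m) < eps) /\
    (forall g, M g -> ripp (psub x m) g = 0).
Proof.
  intros Ml M0 Madd Mscal Hx.
  set (E := fun r => exists g, M g /\ r = - N2p (psub x g)).
  assert (Eb : bound E). { exists 0. intros r [g [Hg Hr]]. rewrite Hr. pose proof (N2p_ge0 (psub x g) (l2p_sub _ _ Hx (Ml g Hg))). lra. }
  assert (Ene : exists r, E r). { exists (- N2p (psub x pzero)). exists pzero; split; auto. }
  destruct (completeness E Eb Ene) as [L [HL1 HL2]].
  set (d := - L).
  assert (Hd1 : forall g, M g -> d <= N2p (psub x g)).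
  { intros g Hg. assert (E (- N2p (psub x g))) by (exists g; auto). apply HL1 in H. unfold d; lra. }
  assert (Hd2 : forall eps, 0 < eps -> exists g, M g /\ N2p (psub x g) < d + eps).
  { intros eps He. apply NNPP. intros Hn.
    assert (is_upper_bound E (L - eps)).
    { intros r [g [Hg Hr]]. rewrite Hr. apply Rnot_lt_le. intros Hlt. apply Hn. exists g. split; auto. unfold d. lra. }
    apply HL2 in H. lra. }
  assert (Hs : forall k, {g | M g /\ N2p (psub x g) < d + / (INR k + 1)}).
  { intros k. apply constructive_indefinite_description. apply Hd2. apply inv_pos. }
  set (s := fun k => proj1_sig (Hs k)).
  assert (HsM : forall k, M (s k)) by (intros k; exact (proj1 (proj2_sig (Hs k)))).
  assert (Hsd : forall k, N2p (psub x (s k)) < d + / (INR k + 1)) by (intros k; exact (proj2 (proj2_sig (Hs k)))).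
  assert (Hsl : forall k, l2p (s k)) by (intros; apply Ml; auto).
  assert (Hcau : forall eps, 0 < eps -> exists K, forall j k, (K <= j)%nat -> (K <= k)%nat -> N2p (psub (s j) (s k)) < eps).
  { intros eps He. destruct (small_inv (eps / 4)) as [K HK]. lra. exists K. intros j k Hj Hk.
    rewrite (parallel_p x) by auto.
    assert (Mmid : M (pscal (1/2) (padd (s j) (s k)))) by auto.
    pose proof (Hd1 _ Mmid). pose proof (Hsd j). pose proof (Hsd k).
    pose proof (inv_mono j K Hj). pose proof (inv_mono k K Hk). lra. }
  destruct (l2_complete (fun k => fst (s k))) as [m1 [Hm1 Cm1]].
  { intros k; apply Hsl. }
  { intros eps He. destruct (Hcau eps He) as [K HK]. exists K. intros j k Hj Hk.
    specialize (HK j k Hj Hk). unfold N2p, psub in HK; simpl in HK.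
    pose proof (N2_ge0 (vsub (snd (s j)) (snd (s k))) (l2_sub _ _ (proj2 (Hsl j)) (proj2 (Hsl k)))). lra. }
  destruct (l2_complete (fun k => snd (s k))) as [m2 [Hm2 Cm2]].
  { intros k; apply Hsl. }
  { intros eps He. destruct (Hcau eps He) as [K HK]. exists K. intros j k Hj Hk.
    specialize (HK j k Hj Hk). unfold N2p, psub in HK; simpl in HK.
    pose proof (N2_ge0 (vsub (fst (s j)) (fst (s k))) (l2_sub _ _ (proj1 (Hsl j)) (proj1 (Hsl k)))). lra. }
  set (m := (m1, m2) : pv).
  assert (Hml : l2p m) by (split; auto).
  assert (Cm : forall eps, 0 < eps -> exists K, forall k, (K <= k)%nat -> N2p (psub (s k) m) < eps).
  { intros eps He. destruct (Cm1 (eps/2)) as [K1 H1]. lra. destruct (Cm2 (eps/2)) as [K2 H2]. lra.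
    exists (Nat.max K1 K2). intros k Hk. unfold N2p, psub, m; simpl.
    specialize (H1 k ltac:(lia)). specialize (H2 k ltac:(lia)). simpl in H1, H2. lra. }
  exists m, s. split; [auto|split; [auto|split; [auto|]]].
  intros g Hg. pose proof (Ml g Hg) as Hgl.
  set (G := N2p g). assert (HG : 0 <= G) by (apply N2p_ge0; auto).
  assert (Hc : forall k, ripp (psub x (s k)) g ^ 2 <= / (INR k + 1) * G).
  { intros k. apply quad_disc. left; apply inv_pos. auto.
    intros t. pose proof (Hd1 _ (Madd _ _ (HsM k) (Mscal t g Hg))) as T.
    rewrite psub_assoc, N2p_quad in T by (auto using l2p_sub).
    pose proof (Hsd k). unfold G. lra. }
  set (R0 := ripp (psub x m) g).
  assert (Hsmall : forall del, 0 < del -> R0 ^ 2 < del).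
  { intros del Hdel.
    destruct (small_inv (del / (4 * (G + 1)))) as [K1 HK1]. { apply Rdiv_lt_0_compat; lra. }
    destruct (Cm (del / (4 * (G + 1)))) as [K2 HK2]. { apply Rdiv_lt_0_compat; lra. }
    set (k := Nat.max K1 K2).
    specialize (HK2 k ltac:(lia)). pose proof (inv_mono k K1 ltac:(lia)).
    pose proof (Hc k).
    pose proof (CSp (psub (s k) m) g (l2p_sub _ _ (Hsl k) Hml) Hgl) as CS2.
    assert (E0 : R0 = ripp (psub x (s k)) g + ripp (psub (s k) m) g) by (apply ripp_split; auto).
    pose proof (N2p_ge0 (psub (s k) m) (l2p_sub _ _ (Hsl k) Hml)).
    fold G in CS2.
    set (a := ripp (psub x (s k)) g) in *. set (b := ripp (psub (s k) m) g) in *.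
    set (e := / (INR k + 1)) in *. set (n := N2p (psub (s k) m)) in *.
    assert (R0 ^ 2 <= 2 * a ^ 2 + 2 * b ^ 2) by (rewrite E0; pose proof (pow2_ge_0 (a - b)); nra).
    assert (e * G <= del / (4 * (G + 1)) * G) by (apply Rmult_le_compat_r; lra).
    assert (n * G <= del / (4 * (G + 1)) * G) by (apply Rmult_le_compat_r; lra).
    assert (del / (4 * (G + 1)) * G < del / 4).
    { replace (del / (4 * (G + 1)) * G) with (del / 4 * (G / (G + 1))) by (field; lra).
      assert (G / (G + 1) < 1).
      { unfold Rdiv. apply (Rmult_lt_reg_r (G+1)). lra. rewrite Rmult_assoc, Rinv_l by lra. lra. }
      assert (0 < del / 4) by lra. nra. }
    lra. }
  destruct (Req_dec R0 0) as [|Hne]; auto.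
  specialize (Hsmall (R0 ^ 2)). assert (0 < R0 ^ 2) by (apply pow2_gt_0; auto). lra.
Qed.

Lemma vec_eq (f g : vec) : (forall n, f n = g n) -> f = g.
Proof. intros H; apply functional_extensionality; exact H. Qed.

Lemma T_lin D T : linear_op D T -> forall a b f g, D f -> D g ->
  T (vadd (vscal a f) (vscal b g)) = vadd (vscal a (T f)) (vscal b (T g)).
Proof. intros (_&_&_&_&_&H); exact H. Qed.

Lemma T_scal D T c f : linear_op D T -> D f -> T (vscal c f) = vscal c (T f).
Proof. intros HL Hf. pose proof (T_lin D T HL c 0 f f Hf Hf) as E.
  replace (vadd (vscal c f) (vscal 0 f)) with (vscal c f) in E.
  - rewrite E. apply vec_eq; intros n; unfold vadd, vscal. generalize (T f n); intros; ptac; f_equal; ring.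
  - apply vec_eq; intros n; unfold vadd, vscal. generalize (f n); intros; ptac; f_equal; ring. Qed.

Lemma T_add D T f g : linear_op D T -> D f -> D g -> T (vadd f g) = vadd (T f) (T g).
Proof. intros HL Hf Hg. pose proof (T_lin D T HL 1 1 f g Hf Hg) as E.
  replace (vadd (vscal 1 f) (vscal 1 g)) with (vadd f g) in E.
  - rewrite E. apply vec_eq; intros n; unfold vadd, vscal. generalize (T f n) (T g n); intros; ptac; f_equal; ring.
  - apply vec_eq; intros n; unfold vadd, vscal. generalize (f n) (g n); intros; ptac; f_equal; ring. Qed.

Lemma T_sub D T f g : linear_op D T -> D f -> D g -> T (vsub f g) = vsub (T f) (T g).
Proof. intros HL Hf Hg. pose proof (T_lin D T HL 1 (-1) f g Hf Hg) as E.
  replace (vadd (vscal 1 f) (vscal (-1) g)) with (vsub f g) in E.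
  - rewrite E. apply vec_eq; intros n; unfold vadd, vscal, vsub. generalize (T f n) (T g n); intros; ptac; f_equal; ring.
  - apply vec_eq; intros n; unfold vadd, vscal, vsub. generalize (f n) (g n); intros; ptac; f_equal; ring. Qed.

Lemma D_sub D T f g : linear_op D T -> D f -> D g -> D (vsub f g).
Proof. intros (_&_&Ha&Hs&_) Hf Hg.
  replace (vsub f g) with (vadd f (vscal (-1) g)).
  - apply Ha; auto.
  - apply vec_eq; intros n; unfold vadd, vscal, vsub. generalize (f n) (g n); intros; ptac; f_equal; ring. Qed.

Lemma T_zero D T : linear_op D T -> T vzero = vzero.
Proof. intros HL. destruct HL as (Hl&H0&HLr). pose proof (T_scal D T 0 vzero (conj Hl (conj H0 HLr)) H0) as E.
  replace (vscal 0 vzero) with vzero in E.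
  - rewrite E. apply vec_eq; intros n; unfold vscal, vzero. generalize (T vzero n); intros; ptac; f_equal; ring.
  - apply vec_eq; intros n; unfold vscal, vzero. ptac; f_equal; ring. Qed.

Lemma rip_cscal' c f h : rip f (vscal c h) = rip (vscal (Cconj c) f) h.
Proof. apply Series_ext. intros n. unfold vscal. generalize (f n) (h n); intros. ptac. ring. Qed.

Lemma ip_split u v : ip u v = (rip u v, rip u (vscal (0,1) v)).
Proof. unfold ip. f_equal. apply Series_ext. intros n. unfold vscal. generalize (u n) (v n); intros. ptac. ring. Qed.

Lemma adj_rip D T D' T' f g : is_adjoint D T D' T' -> D' g -> D f -> rip (T f) g = rip f (T' g).
Proof. intros (_&_&H) Hg Hf. specialize (H g f Hg Hf). rewrite !ip_split in H. injection H; auto. Qed.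

Lemma adj_intro D T D' T' g h : linear_op D T -> is_adjoint D T D' T' -> l2 g -> l2 h ->
  (forall f, D f -> rip (T f) g = rip f h) -> D' g.
Proof. intros HL (HA&_&_) Hg Hh H. apply HA. split; auto. exists h. split; auto.
  intros f Hf. rewrite !ip_split. f_equal; auto.
  rewrite rip_cscal', <- T_scal with (D := D) by auto.
  rewrite H. rewrite rip_cscal. f_equal. f_equal. unfold Cconj; simpl. f_equal; ring.
  destruct HL as (_&_&_&Hs&_). apply Hs; auto. Qed.

Lemma sqrt_lt_sq N e : 0 <= N -> sqrt N < e -> N < e ^ 2.
Proof. intros H1 H2. pose proof (sqrt_sqrt N H1). pose proof (sqrt_pos N). nra. Qed.

Lemma N2_zero_eq f g : l2 f -> l2 g -> N2 (vsub f g) <= 0 -> f = g.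
Proof. intros Hf Hg H. apply vec_eq. intros n.
  pose proof (term_le_N2 _ n (l2_sub _ _ Hf Hg)). pose proof (sqn_ge0 (vsub f g n)).
  assert (E : sqn (vsub f g n) = 0) by lra. unfold vsub in E. revert E. generalize (f n) (g n).
  intros [a b] [c d] E. unfold sqn in E; simpl in E.
  assert (E1 : Rsqr (a - c) = 0). { unfold Rsqr. pose proof (pow2_ge_0 (a - c)); pose proof (pow2_ge_0 (b - d)). simpl in *. lra. }
  assert (E2 : Rsqr (b - d) = 0). { unfold Rsqr. pose proof (pow2_ge_0 (a - c)); pose proof (pow2_ge_0 (b - d)). simpl in *. lra. }
  apply Rsqr_0_uniq in E1, E2. f_equal; lra. Qed.

Lemma uniq D h1 h2 : (forall f, D f -> l2 f) -> densely_defined D -> l2 h1 -> l2 h2 ->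
  (forall f, D f -> rip f h1 = rip f h2) -> h1 = h2.
Proof. intros Dl Dd H1 H2 H. set (k := vsub h1 h2). assert (Hk : l2 k) by (apply l2_sub; auto).
  assert (Ho : forall f, D f -> rip f k = 0). { intros f Hf. unfold k. rewrite rip_subr by auto. rewrite H; auto. ring. }
  apply N2_zero_eq; auto. fold k.
  pose proof (N2_ge0 k Hk).
  apply Rnot_lt_le. intros Hpos.
  destruct (Dd k Hk (sqrt (N2 k / 2))) as [f [Hf Hn]].
  { apply sqrt_lt_R0. lra. }
  rewrite l2norm_N2 in Hn. pose proof (Dl f Hf) as Hfl.
  apply sqrt_lt_sq in Hn; [|apply N2_ge0, l2_sub; auto].
  rewrite pow2_sqrt in Hn by lra.
  assert (E : N2 k = rip (vsub k f) k). { rewrite rip_subl by auto. rewrite rip_self, (Ho f Hf). ring. }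
  pose proof (CS (vsub k f) k (l2_sub _ _ Hk Hfl) Hk) as C. rewrite <- E in C.
  assert (N2 k * N2 k <= N2 k / 2 * N2 k).
  { simpl in C. pose proof (N2_ge0 k Hk). nra. }
  nra. Qed.

Lemma Cconj_inv (c : C) : Cconj (Cconj c) = c.
Proof. destruct c; unfold Cconj; simpl; f_equal; ring. Qed.

Lemma N2_vsub_sym f g : N2 (vsub f g) = N2 (vsub g f).
Proof. unfold N2; apply Series_ext. intros n. unfold vsub. generalize (f n) (g n); intros. ptac. ring. Qed.

Lemma lim_to_eps (w : nat -> vec) f : is_lim_seq (fun k => l2norm (vsub (w k) f)) 0 ->
  forall eps, 0 < eps -> exists K, forall k, (K <= k)%nat -> N2 (vsub (w k) f) < eps.
Proof. intros H eps He. apply is_lim_seq_spec in H.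
  destruct (H (mkposreal (sqrt eps) (sqrt_lt_R0 _ He))) as [K HK]. exists K. intros k Hk.
  specialize (HK k Hk). simpl in HK. rewrite l2norm_N2, Rminus_0_r in HK.
  rewrite Rabs_pos_eq in HK by apply sqrt_pos.
  destruct (Rle_or_lt 0 (N2 (vsub (w k) f))) as [Hp|Hp]; [|lra].
  apply sqrt_lt_0_alt in HK. exact HK. Qed.

Lemma eps_to_lim (w : nat -> vec) f : (forall k, l2 (w k)) -> l2 f ->
  (forall eps, 0 < eps -> exists K, forall k, (K <= k)%nat -> N2 (vsub (w k) f) < eps) ->
  is_lim_seq (fun k => l2norm (vsub (w k) f)) 0.
Proof. intros Hw Hf H. apply is_lim_seq_spec. intros eps.
  destruct (H (eps * eps)) as [K HK]. { pose proof (cond_pos eps). nra. }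
  exists K. intros k Hk. specialize (HK k Hk). rewrite l2norm_N2, Rminus_0_r, Rabs_pos_eq by apply sqrt_pos.
  pose proof (cond_pos eps). rewrite <- (sqrt_square eps) by lra. apply sqrt_lt_1_alt. split; [apply N2_ge0, l2_sub; auto| lra]. Qed.


Lemma Dl_of D T : linear_op D T -> forall f, D f -> l2 f.
Proof. intros (H&_); exact H. Qed.
Lemma Tl_of D T : linear_op D T -> forall f, D f -> l2 (T f).
Proof. intros (_&_&_&_&H&_); exact H. Qed.
Lemma Dscal_of D T : linear_op D T -> forall c f, D f -> D (vscal c f).
Proof. intros (_&_&_&H&_); exact H. Qed.
Lemma Dadd_of D T : linear_op D T -> forall f g, D f -> D g -> D (vadd f g).
Proof. intros (_&_&H&_); exact H. Qed.
Lemma D'l_of D T D' T' : is_adjoint D T D' T' -> forall g, D' g -> l2 g.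
Proof. intros (H&_) g Hg. apply H in Hg. tauto. Qed.
Lemma T'l_of D T D' T' : is_adjoint D T D' T' -> forall g, D' g -> l2 (T' g).
Proof. intros (_&H&_); exact H. Qed.

Lemma adj_formula D T D' T' g h : linear_op D T -> densely_defined D -> is_adjoint D T D' T' ->
  D' g -> l2 h -> (forall f, D f -> rip (T f) g = rip f h) -> T' g = h.
Proof. intros HL Hd HA Hg Hh H. apply (uniq D); auto.
  - apply (Dl_of D T HL).
  - apply (T'l_of D T D' T' HA g Hg).
  - intros f Hf. rewrite <- H by auto. symmetry. apply (adj_rip D T D' T'); auto. Qed.

Lemma adj_add_rel D T D' T' g1 g2 f : linear_op D T -> is_adjoint D T D' T' -> D' g1 -> D' g2 -> D f ->
  rip (T f) (vadd g1 g2) = rip f (vadd (T' g1) (T' g2)).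
Proof. intros HL HA H1 H2 Hf.
  pose proof (Tl_of D T HL). pose proof (Dl_of D T HL). pose proof (D'l_of D T D' T' HA). pose proof (T'l_of D T D' T' HA).
  rewrite !rip_addr; auto.
  rewrite !(adj_rip D T D' T') by auto. reflexivity. Qed.

Lemma adj_scal_rel D T D' T' a g f : linear_op D T -> is_adjoint D T D' T' -> D' g -> D f ->
  rip (T f) (vscal a g) = rip f (vscal a (T' g)).
Proof. intros HL HA Hg Hf.
  rewrite rip_cscal', <- (T_scal D T) by auto.
  rewrite (adj_rip D T D' T') by (auto; apply (Dscal_of D T HL); auto).
  rewrite rip_cscal, Cconj_inv. reflexivity. Qed.

Lemma adj_linear D T D' T' : sarason_toeplitz D T -> is_adjoint D T D' T' -> linear_op D' T'.
Proof. intros HT HA. destruct HT as (HL&Hcl&Hd&_).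
  assert (Dl := Dl_of D T HL). assert (Tl := Tl_of D T HL).
  assert (D'l := D'l_of D T D' T' HA). assert (T'l := T'l_of D T D' T' HA).
  assert (Hadd : forall g1 g2, D' g1 -> D' g2 -> D' (vadd g1 g2)).
  { intros g1 g2 H1 H2. apply (adj_intro D T D' T' _ (vadd (T' g1) (T' g2))); auto using l2_add.
    intros f Hf. apply (adj_add_rel D T D' T'); auto. }
  assert (Hsc : forall a g, D' g -> D' (vscal a g)).
  { intros a g Hg. apply (adj_intro D T D' T' _ (vscal a (T' g))); auto using l2_scal.
    intros f Hf. apply (adj_scal_rel D T D' T'); auto. }
  split; [auto|split; [|split; [auto|split; [auto|split; [auto|]]]]].
  - apply (adj_intro D T D' T' _ vzero); auto using l2_zero.
    intros f Hf. rewrite !rip_zero. reflexivity.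
  - intros a b g1 g2 H1 H2.
    assert (Ea : forall a g, D' g -> T' (vscal a g) = vscal a (T' g)).
    { intros a' g Hg. apply (adj_formula D T D' T'); auto using l2_scal.
      intros f Hf. apply (adj_scal_rel D T D' T'); auto. }
    assert (Eb : forall g1 g2, D' g1 -> D' g2 -> T' (vadd g1 g2) = vadd (T' g1) (T' g2)).
    { intros g1' g2' Hg1 Hg2. apply (adj_formula D T D' T'); auto using l2_add.
      intros f Hf. apply (adj_add_rel D T D' T'); auto. }
    rewrite Eb, !Ea by auto. reflexivity.
Qed.

Lemma small_prod c n del : 0 <= c -> 0 <= n -> 0 < del -> n < del / (4 * (c + 1)) -> c * n <= del / 4.
Proof. intros Hc Hn Hd H.
  assert (c * n <= c * (del / (4 * (c + 1)))) by (apply Rmult_le_compat_l; lra).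
  assert (c * (del / (4 * (c + 1))) = del / 4 * (c / (c + 1))) by (field; lra).
  assert (c / (c + 1) <= 1).
  { unfold Rdiv. apply (Rmult_le_reg_r (c+1)). lra. rewrite Rmult_assoc, Rinv_l by lra. lra. }
  assert (0 < del / 4) by lra. nra. Qed.

Lemma zero_of_small X : (forall del, 0 < del -> X ^ 2 <= del) -> X = 0.
Proof. intros H. destruct (Req_dec X 0) as [|Hne]; auto.
  assert (0 < X ^ 2) by (apply pow2_gt_0; auto). specialize (H (X ^ 2 / 2)). lra. Qed.

Lemma adj_closed D T D' T' : sarason_toeplitz D T -> is_adjoint D T D' T' -> closed_op D' T'.
Proof. intros HT HA. pose proof (adj_linear D T D' T' HT HA) as HL'.
  destruct HT as (HL&Hcl&Hd&_).
  assert (Dl := Dl_of D T HL). assert (Tl := Tl_of D T HL).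
  assert (D'l := D'l_of D T D' T' HA). assert (T'l := T'l_of D T D' T' HA).
  intros u f g Hu Hf Hg L1 L2.
  pose proof (lim_to_eps _ _ L1) as E1. pose proof (lim_to_eps _ _ L2) as E2.
  assert (key : forall p, D p -> rip (T p) f = rip p g).
  { intros p Hp. apply Rminus_diag_uniq. apply zero_of_small. intros del Hdel.
    set (a := N2 (T p)). set (b := N2 p).
    assert (Ha : 0 <= a) by (apply N2_ge0; auto). assert (Hb : 0 <= b) by (apply N2_ge0; auto).
    destruct (E1 (del / (4 * (a + 1)))) as [K1 HK1]. { apply Rdiv_lt_0_compat; lra. }
    destruct (E2 (del / (4 * (b + 1)))) as [K2 HK2]. { apply Rdiv_lt_0_compat; lra. }
    set (k := Nat.max K1 K2). specialize (HK1 k ltac:(lia)). specialize (HK2 k ltac:(lia)).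
    rewrite N2_vsub_sym in HK1, HK2.
    assert (EX : rip (T p) f - rip p g = rip (T p) (vsub f (u k)) - rip p (vsub g (T' (u k)))).
    { rewrite !rip_subr by auto. rewrite (adj_rip D T D' T' p (u k)) by auto. ring. }
    rewrite EX.
    pose proof (CS (T p) (vsub f (u k)) (Tl p Hp) (l2_sub _ _ Hf (D'l _ (Hu k)))) as C1.
    pose proof (CS p (vsub g (T' (u k))) (Dl p Hp) (l2_sub _ _ Hg (T'l _ (Hu k)))) as C2.
    fold a in C1. fold b in C2.
    pose proof (N2_ge0 (vsub f (u k)) (l2_sub _ _ Hf (D'l _ (Hu k)))).
    pose proof (N2_ge0 (vsub g (T' (u k))) (l2_sub _ _ Hg (T'l _ (Hu k)))).
    pose proof (small_prod a _ del Ha H Hdel HK1).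
    pose proof (small_prod b _ del Hb H0 Hdel HK2).
    set (x1 := rip (T p) (vsub f (u k))) in *. set (x2 := rip p (vsub g (T' (u k)))) in *.
    pose proof (pow2_ge_0 (x1 + x2)). nra. }
  assert (HD' : D' f) by (apply (adj_intro D T D' T' f g); auto).
  split; auto. apply (adj_formula D T D' T'); auto.
Qed.

Lemma rip_incr u v : l2 u -> l2 v -> rip u v = Re (Cmult (u 0%nat) (Cconj (v 0%nat))) + rip (shift_adj u) (shift_adj v).
Proof. intros. unfold rip at 1. rewrite Series_incr_1 by (apply ex_rip; auto). reflexivity. Qed.

Lemma rip_shift_l x v : l2 x -> l2 v -> rip (shift x) v = rip x (shift_adj v).
Proof. intros. rewrite rip_incr by (auto using l2_shift). simpl.
  assert (E: forall a b : R, 0 * a - 0 * - b = 0) by (intros; ring). rewrite E, Rplus_0_l. reflexivity. Qed.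

Lemma rip_shift_r u g : l2 u -> l2 g -> rip u (shift g) = rip (shift_adj u) g.
Proof. intros. rewrite rip_sym, rip_shift_l, rip_sym by auto. reflexivity. Qed.

Definition e0 : vec := fun n => match n with O => RtoC 1 | S _ => RtoC 0 end.
Lemma l2_e0 : l2 e0.
Proof. apply l2_alt. apply ex_series_incr_1. simpl. apply (ex_series_ext (fun _ => 0)).
  - intros n. unfold sqn; simpl; ring.
  - apply ex_zero. Qed.

Lemma rip_e0 f c : l2 f -> rip f (vscal c e0) = Re (Cmult (f 0%nat) (Cconj c)).
Proof. intros Hf. rewrite rip_incr by (auto using l2_scal, l2_e0).
  replace (shift_adj (vscal c e0)) with vzero.
  - rewrite rip_zero. unfold vscal, e0. simpl. generalize (f 0%nat) c. intros. ptac. ring.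
  - apply vec_eq. intros n. unfold shift_adj, vscal, e0, vzero. ptac. f_equal; ring. Qed.

Lemma exists_k D T : sarason_toeplitz D T -> exists k, D k /\ k 0%nat <> RtoC 0.
Proof. intros (HL&_&Hd&_). destruct (Hd e0 l2_e0 (1/2)) as [k [Hk Hn]]. lra.
  exists k. split; auto. intros E.
  rewrite l2norm_N2 in Hn. pose proof (Dl_of D T HL k Hk).
  apply sqrt_lt_sq in Hn; [|apply N2_ge0, l2_sub; auto using l2_e0].
  pose proof (term_le_N2 (vsub e0 k) 0%nat (l2_sub _ _ l2_e0 H)).
  change (sqn (vsub e0 k 0%nat)) with (sqn (Cminus (RtoC 1) (k 0%nat))) in H0. rewrite E in H0.
  assert (sqn (Cminus (RtoC 1) (RtoC 0)) = 1) by (unfold sqn; simpl; ring). lra. Qed.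

Lemma v0_alg (f0 k0 q : C) : f0 = Cmult q k0 ->
  Cminus (Cminus f0 (Cmult (RtoC (fst q)) k0)) (Cmult (RtoC (snd q)) (Cmult (0,1) k0)) = RtoC 0.
Proof. intros ->. destruct q, k0. unfold Cminus, Cmult, Cplus, Copp, RtoC; simpl. f_equal; ring. Qed.

Lemma adj_shift D T D' T' : sarason_toeplitz D T -> is_adjoint D T D' T' -> forall g, D' g ->
  D' (shift g) /\ shift_adj (T' (shift g)) = T' g.
Proof.
  intros HT HA g Hg. pose proof HT as HT'. destruct HT' as (HL&Hcl&Hd&Hsh&Hsts&Hbk).
  assert (Dl := Dl_of D T HL). assert (Tl := Tl_of D T HL).
  assert (D'l := D'l_of D T D' T' HA). assert (T'l := T'l_of D T D' T' HA).
  assert (Ds := Dscal_of D T HL).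
  destruct (exists_k D T HT) as [k [Hk Hk0]].
  set (k2 := vscal (0,1) k). assert (Hk2 : D k2) by (apply Ds; auto).
  set (phi := fun f => rip (T f) (shift g) - rip f (shift (T' g))).
  assert (Hphi0 : forall w, D w -> phi (shift w) = 0).
  { intros w Hw. unfold phi. rewrite rip_shift_r by (auto using l2_shift).
    rewrite Hsts by auto. rewrite rip_shift_l by (auto using l2_shift).
    change (shift_adj (shift (T' g))) with (T' g).
    rewrite (adj_rip D T D' T' w g) by auto. ring. }
  set (c1 := phi k). set (c2 := phi k2).
  set (mu := Cdiv (c1, - c2) (k 0%nat)). set (lam := Cconj mu).
  set (h' := vadd (shift (T' g)) (vscal lam e0)).
  assert (Hh' : l2 h') by (apply l2_add; [apply l2_shift; auto| apply l2_scal, l2_e0]).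
  assert (Hrel : forall f, D f -> rip (T f) (shift g) = rip f h').
  { intros f Hf. unfold h'. rewrite rip_addr by (auto using l2_shift, l2_scal, l2_e0).
    rewrite rip_e0 by auto.
    set (q := Cdiv (f 0%nat) (k 0%nat)). set (al := fst q). set (be := snd q).
    set (v := vsub (vsub f (vscal (RtoC al) k)) (vscal (RtoC be) k2)).
    assert (Dv : D v).
    { unfold v. apply (D_sub D T); auto. apply (D_sub D T); auto. }
    assert (Eq : f 0%nat = Cmult q (k 0%nat)) by (unfold q; field; auto).
    assert (v0 : v 0%nat = RtoC 0).
    { unfold v, vsub, vscal, k2. apply v0_alg. exact Eq. }
    assert (Hv : v = shift (shift_adj v)).
    { apply vec_eq. intros [|n]; simpl; [exact v0| reflexivity]. }
    assert (P0 : phi v = 0) by (rewrite Hv; apply Hphi0; apply Hbk; auto).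
    assert (Pl : phi v = phi f - al * c1 - be * c2).
    { unfold phi, v, c1, c2, phi.
      rewrite (T_sub D T) by (auto; apply (D_sub D T); auto).
      rewrite (T_sub D T) by auto.
      rewrite !(T_scal D T) by auto.
      pose proof (Tl f Hf). pose proof (Tl k Hk). pose proof (Tl k2 Hk2).
      pose proof (Dl f Hf). pose proof (Dl k Hk). pose proof (Dl k2 Hk2).
      assert (l2 (shift g)) by (apply l2_shift; auto). assert (l2 (shift (T' g))) by (apply l2_shift; auto).
      rewrite !rip_subl by (auto using l2_sub, l2_scal).
      rewrite !rip_scall. ring. }
    assert (Re (Cmult (f 0%nat) (Cconj lam)) = al * c1 + be * c2).
    { unfold lam. rewrite Cconj_inv. unfold mu.
      replace (Cmult (f 0%nat) (Cdiv (c1, - c2) (k 0%nat))) with (Cmult q (c1, - c2)) by (unfold q; field; auto).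
      unfold al, be. destruct q. simpl. ring. }
    assert (Pf : phi f = al * c1 + be * c2) by lra.
    unfold phi in Pf. lra. }
  assert (HD : D' (shift g)) by (apply (adj_intro D T D' T' _ h'); auto using l2_shift).
  split; auto.
  rewrite (adj_formula D T D' T' (shift g) h') by auto.
  apply vec_eq. intros n. unfold shift_adj, h', vadd, vscal, e0, shift. generalize (T' g n). intros. ptac. f_equal; ring.
Qed.

Lemma adj_back D T D' T' : sarason_toeplitz D T -> is_adjoint D T D' T' -> forall g, D' g ->
  g 0%nat = RtoC 0 -> D' (shift_adj g).
Proof.
  intros HT HA g Hg Hg0. pose proof HT as HT'. destruct HT' as (HL&Hcl&Hd&Hsh&Hsts&Hbk).
  assert (Dl := Dl_of D T HL). assert (Tl := Tl_of D T HL).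
  assert (D'l := D'l_of D T D' T' HA). assert (T'l := T'l_of D T D' T' HA).
  apply (adj_intro D T D' T' _ (shift_adj (T' g))); auto using l2_sadj.
  intros f Hf. rewrite <- (Hsts f Hf).
  assert (E : rip (T (shift f)) g = Re (Cmult (T (shift f) 0%nat) (Cconj (g 0%nat))) + rip (shift_adj (T (shift f))) (shift_adj g))
    by (apply rip_incr; auto).
  rewrite Hg0 in E. simpl in E.
  assert (E2: forall a b : R, a * 0 - b * - 0 = 0) by (intros; ring). rewrite E2, Rplus_0_l in E.
  rewrite <- E. rewrite (adj_rip D T D' T') by auto. apply rip_shift_l; auto. Qed.

Lemma N2_sub_zero f : N2 (vsub f vzero) = N2 f.
Proof. unfold N2; apply Series_ext; intros n. unfold vsub, vzero. generalize (f n); intros. ptac. ring. Qed.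

Lemma adj_dense D T D' T' : sarason_toeplitz D T -> is_adjoint D T D' T' -> densely_defined D'.
Proof.
  intros HT HA. pose proof (adj_linear D T D' T' HT HA) as HL'.
  pose proof HT as HT'. destruct HT' as (HL&Hcl&Hd&Hsh&Hsts&Hbk).
  assert (Dl := Dl_of D T HL). assert (Tl := Tl_of D T HL).
  assert (D'l := D'l_of D T D' T' HA). assert (T'l := T'l_of D T D' T' HA).
  intros x Hx eps Heps. apply NNPP. intros Hno.
  assert (Hno' : forall g, D' g -> eps ^ 2 <= N2 (vsub x g)).
  { intros g Hg. apply Rnot_lt_le. intros Hlt. apply Hno. exists g. split; auto.
    rewrite l2norm_N2. rewrite <- (sqrt_pow2 eps) by lra. apply sqrt_lt_1_alt. split; auto.
    apply N2_ge0, l2_sub; auto. }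
  set (M1 := fun p : pv => exists g, D' g /\ p = (g, vzero)).
  destruct (projection M1 (x, vzero)) as [m [s [Hm [HsM [Cs Ho1]]]]].
  - intros p [g [Hg ->]]. split; simpl; auto using l2_zero.
  - exists vzero. split; [apply HL'|reflexivity].
  - intros p q [g1 [H1 ->]] [g2 [H2 ->]]. exists (vadd g1 g2). split; [apply HL'; auto|].
    unfold padd; simpl. f_equal. apply vec_eq; intros n; unfold vadd, vzero; ptac; f_equal; ring.
  - intros t p [g [H1 ->]]. exists (vscal (RtoC t) g). split; [apply HL'; auto|].
    unfold pscal; simpl. f_equal. apply vec_eq; intros n; unfold vscal, vzero; ptac; f_equal; ring.
  - split; simpl; auto using l2_zero.
  - destruct m as [m1 m2]. destruct Hm as [Hm1 Hm2]. simpl in Hm1, Hm2.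
    set (r := vsub x m1). assert (Hr : l2 r) by (apply l2_sub; auto).
    assert (rorth : forall g, D' g -> rip r g = 0).
    { intros g Hg. assert (M1 (g, vzero)) by (exists g; auto). specialize (Ho1 _ H).
      unfold ripp, psub in Ho1; simpl in Ho1. rewrite rip_zero in Ho1. unfold r. lra. }
    set (M2 := fun p : pv => exists f, D f /\ p = (vscal (RtoC (-1)) (T f), f)).
    destruct (projection M2 (r, vzero)) as [m' [s' [Hm' [HsM' [Cs' Ho2]]]]].
    + intros p [f [Hf ->]]. split; simpl; auto using l2_scal.
    + exists vzero. split; [destruct HL as (_&?&_); auto|]. unfold pzero. rewrite (T_zero D T HL).
      f_equal. apply vec_eq; intros n; unfold vscal, vzero; ptac; f_equal; ring.
    + intros p q [f1 [H1 ->]] [f2 [H2 ->]]. exists (vadd f1 f2). split; [apply (Dadd_of D T HL); auto|].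
      unfold padd; simpl. rewrite (T_add D T) by auto. f_equal.
      apply vec_eq; intros n; unfold vscal, vadd. generalize (T f1 n) (T f2 n); intros; ptac; f_equal; ring.
    + intros t p [f [H1 ->]]. exists (vscal (RtoC t) f). split; [apply (Dscal_of D T HL); auto|].
      unfold pscal; simpl. rewrite (T_scal D T) by auto. f_equal.
      apply vec_eq; intros n; unfold vscal. generalize (T f n); intros; ptac; f_equal; ring.
    + split; simpl; auto using l2_zero.
    + destruct m' as [a b]. destruct Hm' as [Ha Hb]. simpl in Ha, Hb.
      assert (Hfk : forall k, {f | D f /\ s' k = (vscal (RtoC (-1)) (T f), f)}).
      { intros k. apply constructive_indefinite_description. apply HsM'. }
      set (fk := fun k => proj1_sig (Hfk k)).
      assert (HfkD : forall k, D (fk k)) by (intros k; exact (proj1 (proj2_sig (Hfk k)))).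
      assert (Hfks : forall k, s' k = (vscal (RtoC (-1)) (T (fk k)), fk k)) by (intros k; exact (proj2 (proj2_sig (Hfk k)))).
      destruct (Hcl fk b (vscal (RtoC (-1)) a) HfkD Hb (l2_scal _ _ Ha)) as [HbD HTb].
      { apply eps_to_lim; auto. intros e He. destruct (Cs' e He) as [K HK]. exists K. intros k Hk.
        specialize (HK k Hk). rewrite Hfks in HK. unfold N2p, psub in HK; simpl in HK.
        pose proof (N2_ge0 (vsub (vscal (RtoC (-1)) (T (fk k))) a) (l2_sub _ _ (l2_scal _ _ (Tl _ (HfkD k))) Ha)). lra. }
      { apply eps_to_lim; auto using l2_scal. intros e He. destruct (Cs' e He) as [K HK]. exists K. intros k Hk.
        specialize (HK k Hk). rewrite Hfks in HK. unfold N2p, psub in HK; simpl in HK.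
        pose proof (N2_ge0 (vsub (fk k) b) (l2_sub _ _ (Dl _ (HfkD k)) Hb)).
        replace (N2 (vsub (T (fk k)) (vscal (RtoC (-1)) a))) with (N2 (vsub (vscal (RtoC (-1)) (T (fk k))) a)).
        - lra.
        - unfold N2; apply Series_ext; intros n. unfold vsub, vscal. generalize (T (fk k) n) (a n); intros; ptac; ring. }
      set (p := vsub r a). assert (Hp : l2 p) by (apply l2_sub; auto).
      assert (Hrelp : forall f, D f -> rip (T f) p = rip f (vsub vzero b)).
      { intros f Hf. assert (M2 (vscal (RtoC (-1)) (T f), f)) by (exists f; auto).
        specialize (Ho2 _ H). unfold ripp, psub in Ho2; simpl in Ho2.
        rewrite rip_scalr in Ho2. rewrite (rip_sym (vsub vzero b)) in Ho2. rewrite (rip_sym _ (T f)) in Ho2.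
        fold p in Ho2. lra. }
      assert (HpD : D' p) by (apply (adj_intro D T D' T' p (vsub vzero b)); auto using l2_sub, l2_zero).
      pose proof (rorth p HpD) as Rp.
      pose proof (Hrelp b HbD) as Eb. rewrite HTb, rip_scall in Eb.
      rewrite rip_subr, rip_zero, rip_self in Eb by (auto using l2_zero).
      assert (Np : N2 p = rip r p - rip a p) by (rewrite <- rip_self; unfold p at 1; apply rip_subl; auto).
      pose proof (N2_ge0 p Hp). pose proof (N2_ge0 b Hb).
      assert (N2b : N2 b = 0) by lra. assert (N2p0 : N2 p = 0) by lra.
      assert (Eb0 : b = vzero) by (apply N2_zero_eq; auto using l2_zero; rewrite N2_sub_zero; lra).
      assert (Ea0 : a = vzero).
      { rewrite Eb0, (T_zero D T HL) in HTb. apply vec_eq; intros n.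
        assert (E := f_equal (fun h => h n) HTb). simpl in E. unfold vscal, vzero in *.
        revert E. generalize (a n). intros. ptac. injection E. intros. f_equal; lra. }
      assert (Hr0 : x = m1).
      { apply N2_zero_eq; auto. fold r. replace r with p. lra.
        unfold p. rewrite Ea0. apply vec_eq; intros n. unfold vsub, vzero. generalize (r n); intros; ptac; f_equal; ring. }
      destruct (Cs (eps ^ 2)) as [K HK]. { apply pow2_gt_0; lra. }
      specialize (HK K (le_n K)). destruct (HsM K) as [g [Hg Eg]]. rewrite Eg in HK.
      unfold N2p, psub in HK; simpl in HK.
      pose proof (N2_ge0 (vsub vzero m2) (l2_sub _ _ l2_zero Hm2)).
      specialize (Hno' g Hg). rewrite Hr0, N2_vsub_sym in Hno'. lra.
Qed.

Theorem proposition1 (D : vec -> Prop) (T : vec -> vec)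
    (D' : vec -> Prop) (T' : vec -> vec) :
  sarason_toeplitz D T -> is_adjoint D T D' T' -> sarason_toeplitz D' T'.
Proof.
  intros HT HA.
  split; [apply (adj_linear D T D' T'); auto|].
  split; [apply (adj_closed D T D' T'); auto|].
  split; [apply (adj_dense D T D' T'); auto|].
  split; [intros g Hg; exact (proj1 (adj_shift D T D' T' HT HA g Hg))|].
  split; [intros g Hg; exact (proj2 (adj_shift D T D' T' HT HA g Hg))|].
  intros g Hg H0; apply (adj_back D T D' T'); auto.
Qed.
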